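(* Under the standing setup with $\mathrm{Var}(X_N)>0$, suppose contextual reinforcement holds: $\delta_W\cdot\delta_B\ge 0$. Then: (i) if $D_{ER}\ge D_{NM}$, then $0\le D_{NM}\le D\le\min\{D^+_{MOB},D_{ER}\}$; (ii) if $D_{ER}\le D_{NM}$, then $\max\{D^-_{MOB},D_{ER}\}\le D\le D_{NM}\le 0$; (iii) the bounds in (i) and (ii) are sharp under the assumption $\delta_W\delta_B\ge 0$ (absent additional information).
   Context: Let $(X,Y,N)$ be a random triple with $X\in\{0,1\}$, $Y$ real-valued, $N$ taking values in a finite set $\mathcal N$. Write $p_n=\Pr(N=n)$, $X_n=\mathbb E[X\mid N=n]$, $Y_n=\mathbb E[Y\mid N=n]$, $X_N=\mathbb E[X\mid N]$, $Y_N=\mathbb E[Y\mid N]$. Assume some $n$ has $p_n>0$ and $X_n\in(0,1)$, and fix reals $\underline Y\le\overline Y$ with $\mathbb E[Y\mid X=x,N=n]\in[\underline Y,\overline Y]$ whenever $\Pr(X=x,N=n)>0$. $D=\mathbb E[Y\mid X=1]-\mathbb E[Y\mid X=0]$; $\delta_B=\mathbb E[\mathrm{Cov}(Y,X\mid N)]$; $\delta_W=\mathbb E[\mathrm{Cov}(Y,X_N\mid X)]$; $D_{ER}=\mathrm{Cov}(Y_N,X_N)/\mathrm{Var}(X_N)$; $D_{NM}=\mathbb E[X_NY_N]/\mathbb E[X_N]-\mathbb E[(1-X_N)Y_N]/\mathbb E[1-X_N]$; $D^+_{MOB}=\big(\mathbb E[\min\{Y_N-\underline Y(1-X_N),\overline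 Y X_N\}]-\mathbb E[X]\mathbb E[Y]\big)/\mathrm{Var}(X)$, $D^-_{MOB}=\big(\mathbb E[Y](1-\mathbb E[X])-\mathbb E[\min\{Y_N-\underline Y X_N,\overline Y(1-X_N)\}]\big)/\mathrm{Var}(X)$. Sharpness under an assumption $\mathcal A$: the parameter lies in the interval for every joint distribution satisfying the standing assumptions and $\mathcal A$, and every value in the interval is attained by some joint distribution of $(X,Y,N)$ with the same observed $(p_n,X_n,Y_n)_n$, satisfying the standing bound and $\mathcal A$. *)

(* Defs.v *)
From HB Require Import structures.
From mathcomp Require Import all_boot all_order all_algebra.
From mathcomp Require Import all_classical all_reals all_analysis.
Set Implicit Arguments. Unset Strict Implicit. Unset Printing Implicit Defensive.
Import Order.TTheory GRing.Theory Num.Theory.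
Local Open Scope classical_set_scope.
Local Open Scope ring_scope.

(* A joint distribution of (X, Y, N), X in {0,1} (encoded as bool), Y real,
   N in a finite type Nt, given by its (fully general) disintegration:
   lpr x n = Pr(X = x, N = n), and lmu x n = conditional law of Y given
   (X, N) = (x, n) (arbitrary/irrelevant on cells of probability zero). *)
Record law (R : realType) (Nt : finType) := Law {
  lpr : bool -> Nt -> R ;
  lmu : bool -> Nt -> probability R R }.

Section Defs.
Variables (R : realType) (Nt : finType).
Implicit Types (L : law R Nt) (x : bool) (n : Nt).

Definition valid_law L :=
  (forall x n, 0 <= lpr L x n) /\
  (\sum_(n : Nt) \sum_(x : bool) lpr L x n = 1) /\
  (forall x n, 0 < lpr L x n -> (lmu L x n).-integrable setT (fun y : R => y%:E)).

Definition b2R x : R := if x then 1 else 0.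

Definition Ex L (g : bool -> R -> Nt -> R) : R :=
  \sum_(n : Nt) \sum_(x : bool)
     lpr L x n * fine (\int[lmu L x n]_(y in setT) (g x y n)%:E)%E.

Definition pN L n : R := Ex L (fun _ _ m => b2R (m == n)).
Definition pX L x : R := Ex L (fun x' _ _ => b2R (x' == x)).
Definition pXN L x n : R :=
  Ex L (fun x' _ m => b2R ((x' == x) && (m == n))).

Definition condN L (g : bool -> R -> Nt -> R) n : R :=
  Ex L (fun x y m => b2R (m == n) * g x y m) / pN L n.
Definition condX L (g : bool -> R -> Nt -> R) x : R :=
  Ex L (fun x' y m => b2R (x' == x) * g x' y m) / pX L x.
Definition condXN L (g : bool -> R -> Nt -> R) x n : R :=
  Ex L (fun x' y m => b2R ((x' == x) && (m == n)) * g x' y m) / pXN L x n.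

Definition XN L n : R := condN L (fun x _ _ => b2R x) n.
Definition YN L n : R := condN L (fun _ y _ => y) n.

Definition EX L : R := Ex L (fun x _ _ => b2R x).
Definition EY L : R := Ex L (fun _ y _ => y).
Definition VarX L : R := Ex L (fun x _ _ => (b2R x - EX L) ^+ 2).

Definition Dpar L : R :=
  condX L (fun _ y _ => y) true - condX L (fun _ y _ => y) false.

Definition covYX_N L n : R :=
  condN L (fun x y _ => (y - YN L n) * (b2R x - XN L n)) n.
Definition deltaB L : R := Ex L (fun _ _ m => covYX_N L m).

Definition covYXN_X L x : R :=
  condX L (fun _ y m => (y - condX L (fun _ y' _ => y') x) *
                        (XN L m - condX L (fun _ _ m' => XN L m') x)) x.
Definition deltaW L : R := Ex L (fun x _ _ => covYXN_X L x).

Definition EXN L : R := Ex L (fun _ _ m => XN L m).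
Definition EYN L : R := Ex L (fun _ _ m => YN L m).
Definition VarXN L : R := Ex L (fun _ _ m => (XN L m - EXN L) ^+ 2).
Definition CovYNXN L : R :=
  Ex L (fun _ _ m => (YN L m - EYN L) * (XN L m - EXN L)).

Definition D_ER L : R := CovYNXN L / VarXN L.
Definition D_NM L : R :=
  Ex L (fun _ _ m => XN L m * YN L m) / Ex L (fun _ _ m => XN L m)
  - Ex L (fun _ _ m => (1 - XN L m) * YN L m) / Ex L (fun _ _ m => 1 - XN L m).

Definition D_MOBp (Ylo Yhi : R) L : R :=
  (Ex L (fun _ _ m => Num.min (YN L m - Ylo * (1 - XN L m)) (Yhi * XN L m))
   - EX L * EY L) / VarX L.
Definition D_MOBm (Ylo Yhi : R) L : R :=
  (EY L * (1 - EX L)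
   - Ex L (fun _ _ m => Num.min (YN L m - Ylo * XN L m) (Yhi * (1 - XN L m))))
  / VarX L.

Definition standing_bound (Ylo Yhi : R) L :=
  forall x n, 0 < pXN L x n ->
    Ylo <= condXN L (fun _ y _ => y) x n <= Yhi.

Definition standing_overlap L := exists n, 0 < pN L n /\ 0 < XN L n < 1.

Definition same_observed L L' :=
  forall n, [/\ pN L' n = pN L n, XN L' n = XN L n & YN L' n = YN L n].

Definition reinforcement L := 0 <= deltaW L * deltaB L.

End Defs.

(* Main.v *)
Require Import Defs.
From HB Require Import structures.
From mathcomp Require Import all_boot all_order all_algebra.
From mathcomp Require Import all_classical all_reals all_analysis.
From mathcomp Require Import measurable_realfun.
From mathcomp Require Import ring lra.
Import Order.TTheory GRing.Theory Num.Theory.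
Local Open Scope ring_scope.

Section S.
Context {R : realType} {Nt : finType}.

Definition MM (L : law R Nt) x n : R :=
  fine (\int[lmu L x n]_(y in setT) y%:E)%E.

Lemma Ex_aff (L : law R Nt) (hv : valid_law L) g a b :
  (forall x y n, g x y n = a x n + b x n * y) ->
  Ex L g = \sum_n \sum_x lpr L x n * (a x n + b x n * MM L x n).
Proof.
move=> hg; rewrite /Ex; apply: eq_bigr => n _; apply: eq_bigr => x _.
case: hv => [h0 [_ hi]].
have := h0 x n; rewrite le0r => /orP[/eqP->|hp]; first by rewrite !mul0r.
congr (_ * _).
have ii := hi x n hp.
rewrite (eq_integral (fun y => ((a x n)%:E + (b x n)%:E * y%:E)%E)); last first.
  by move=> y _; rewrite hg EFinD EFinM.
rewrite integralD //; last first.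
- exact: integrableZl.
- exact: finite_measure_integrable_cst.
rewrite integralZl // integral_cst //.
set m := (X in (_ * X + _)%E).
have -> : m = 1%E by rewrite /m; exact: probability_setT.
rewrite mule1.
rewrite /MM; have hf := integrable_fin_num measurableT ii.
by rewrite -[in LHS](fineK hf) -EFinM -EFinD.
Qed.

Lemma ExE (L : law R Nt) (hv : valid_law L) g a b :
  (forall x y n, g x y n = a x n + b x n * y) ->
  Ex L g = \sum_m (lpr L true m * (a true m + b true m * MM L true m)
                 + lpr L false m * (a false m + b false m * MM L false m)).
Proof. by move=> hg; rewrite (@Ex_aff L hv g a b hg); apply: eq_bigr => m _; rewrite big_bool. Qed.

Lemma sum_ind (f : Nt -> R) n : \sum_m b2R R (m == n) * f m = f n.
Proof.
rewrite (bigD1 n) //= eqxx mul1r big1 ?addr0 // => m /negbTE ->.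
by rewrite mul0r.
Qed.

Definition pp (L : law R Nt) m := lpr L true m + lpr L false m.
Definition ss (L : law R Nt) m :=
  lpr L true m * MM L true m + lpr L false m * MM L false m.

Definition P1 (L : law R Nt) := \sum_m lpr L true m.
Definition P0 (L : law R Nt) := \sum_m lpr L false m.
Definition A1 (L : law R Nt) := \sum_m lpr L true m * MM L true m.
Definition A0 (L : law R Nt) := \sum_m lpr L false m * MM L false m.
Definition AA (L : law R Nt) := \sum_m ss L m.
Definition E1 (L : law R Nt) := \sum_m lpr L true m * XN L m.
Definition TT (L : law R Nt) := \sum_m ss L m * XN L m.
Definition K1 (L : law R Nt) := \sum_m lpr L true m * MM L true m * XN L m.
Definition K0 (L : law R Nt) := \sum_m lpr L false m * MM L false m * XN L m.

Section L.
Variable (L : law R Nt).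
Hypothesis hv : valid_law L.

Lemma q_ge0 x m : 0 <= lpr L x m.
Proof. by case: hv => h _; apply: h. Qed.

Lemma pp_ge0 m : 0 <= pp L m.
Proof. by rewrite /pp addr_ge0 // q_ge0. Qed.

Lemma pp0 m : pp L m = 0 -> lpr L true m = 0 /\ lpr L false m = 0.
Proof.
move=> h; have h1 := q_ge0 true m; have h0 := q_ge0 false m.
move: h; rewrite /pp => h; split; lra.
Qed.

Lemma Ex_f (f : Nt -> R) : Ex L (fun _ _ m => f m) = \sum_m pp L m * f m.
Proof.
rewrite (@ExE L hv _ (fun _ m => f m) (fun _ _ => 0)); last by move=> *; rewrite mul0r addr0.
by apply: eq_bigr => m _; rewrite /pp; ring.
Qed.

Lemma pN_E n : pN L n = pp L n.
Proof. by rewrite /pN Ex_f -[RHS]sum_ind; apply: eq_bigr => m _; rewrite mulrC. Qed.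

Lemma XN_E n : XN L n = lpr L true n / pp L n.
Proof.
rewrite /XN /condN pN_E; congr (_ / _).
rewrite (@ExE L hv _ (fun x m => b2R R (m == n) * b2R R x) (fun _ _ => 0)); last by move=> *; rewrite mul0r addr0.
rewrite -[RHS](sum_ind (fun m => lpr L true m)); apply: eq_bigr => m _ /=.
rewrite /b2R; ring.
Qed.

Lemma YN_E n : YN L n = ss L n / pp L n.
Proof.
rewrite /YN /condN pN_E; congr (_ / _).
rewrite (@ExE L hv _ (fun x m => 0) (fun x m => b2R R (m == n))); last by move=> *; rewrite add0r.
rewrite -[RHS](sum_ind (ss L)); apply: eq_bigr => m _ /=.
rewrite /ss; ring.
Qed.

Lemma pXN_E x n : pXN L x n = lpr L x n.
Proof.
rewrite /pXN.
rewrite (@ExE L hv _ (fun x' m => b2R R ((x' == x) && (m == n))) (fun _ _ => 0)); last by move=> *; rewrite mul0r addr0.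
rewrite -[RHS](sum_ind (fun m => lpr L x m)); apply: eq_bigr => m _ /=.
by case: x; rewrite /b2R /=; case: (m == n); ring.
Qed.

Lemma condXN_E x n :
  condXN L (fun _ y _ => y) x n = lpr L x n * MM L x n / lpr L x n.
Proof.
rewrite /condXN pXN_E; congr (_ / _).
rewrite (@ExE L hv _ (fun _ _ => 0) (fun x' m => b2R R ((x' == x) && (m == n)))); last by move=> *; rewrite add0r.
rewrite -[RHS](sum_ind (fun m => lpr L x m * MM L x m)); apply: eq_bigr => m _ /=.
by case: x; rewrite /b2R /=; case: (m == n); ring.
Qed.

Lemma ppX m : pp L m * XN L m = lpr L true m.
Proof.
rewrite XN_E; have [h|h] := eqVneq (pp L m) 0.
  by case: (pp0 _ h) => -> _; rewrite h mul0r.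
by rewrite mulrC divfK.
Qed.

Lemma ppY m : pp L m * YN L m = ss L m.
Proof.
rewrite YN_E; have [h|h] := eqVneq (pp L m) 0.
  by case: (pp0 _ h) => h1 h0; rewrite /ss h1 h0 h; ring.
by rewrite mulrC divfK.
Qed.

Lemma pp1X m : pp L m * (1 - XN L m) = lpr L false m.
Proof. by rewrite mulrBr mulr1 ppX /pp; ring. Qed.

Lemma bound_cell Ylo Yhi x m : standing_bound Ylo Yhi L ->
  Ylo * lpr L x m <= lpr L x m * MM L x m <= Yhi * lpr L x m.
Proof.
move=> sb; have := q_ge0 x m; rewrite le0r => /orP[/eqP->|hp].
  by rewrite !mulr0 mul0r lexx.
have := sb x m; rewrite pXN_E condXN_E => /(_ hp).
rewrite mulrC mulKf ?gt_eqF // => /andP[h1 h2].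
by apply/andP; split; nra.
Qed.


Lemma sum_lin (u v : Nt -> R) c d :
  \sum_m (u m * c + v m * d) = (\sum_m u m) * c + (\sum_m v m) * d.
Proof. by rewrite big_split /= -!mulr_suml. Qed.

Lemma P10 : P1 L + P0 L = 1.
Proof.
case: hv => _ [h _]; rewrite -h /P1 /P0 -big_split /=.
by apply: eq_bigr => m _; rewrite big_bool.
Qed.

Lemma EX_E : EX L = P1 L.
Proof.
rewrite /EX (@ExE L hv _ (fun x _ => b2R R x) (fun _ _ => 0)); last by move=> *; rewrite mul0r addr0.
by apply: eq_bigr => m _ /=; rewrite /b2R; ring.
Qed.

Lemma EY_E : EY L = AA L.
Proof.
rewrite /EY (@ExE L hv _ (fun _ _ => 0) (fun _ _ => 1)); last by move=> *; rewrite mul1r add0r.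
by apply: eq_bigr => m _ /=; rewrite /ss; ring.
Qed.

Lemma AA_E : AA L = A1 L + A0 L.
Proof. by rewrite /AA /A1 /A0 -big_split. Qed.

Lemma pX_E x : pX L x = \sum_m lpr L x m.
Proof.
rewrite /pX (@ExE L hv _ (fun x' _ => b2R R (x' == x)) (fun _ _ => 0)); last by move=> *; rewrite mul0r addr0.
by apply: eq_bigr => m _ /=; case: x; rewrite /b2R /=; ring.
Qed.

Lemma condX_E g (a b : Nt -> R) x :
  (forall x' y m, g x' y m = a m + b m * y) ->
  condX L g x = (\sum_m lpr L x m * (a m + b m * MM L x m)) / pX L x.
Proof.
move=> hg; rewrite /condX; congr (_ / _).
rewrite (@ExE L hv _ (fun x' m => b2R R (x' == x) * a m) (fun x' m => b2R R (x' == x) * b m)); last first.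
  by move=> x' y m; rewrite hg; ring.
by apply: eq_bigr => m _ /=; case: x; rewrite /b2R /=; ring.
Qed.

Lemma Dpar_E : Dpar L = A1 L / P1 L - A0 L / P0 L.
Proof.
rewrite /Dpar (@condX_E _ (fun _ => 0) (fun _ => 1)) ?(@condX_E _ (fun _ => 0) (fun _ => 1));
  try by move=> *; rewrite mul1r add0r.
rewrite !pX_E /A1 /A0 /P1 /P0; congr (_ / _ - _ / _); apply: eq_bigr => m _; ring.
Qed.

Lemma VarX_E : VarX L = P1 L * P0 L.
Proof.
rewrite /VarX EX_E (@ExE L hv _ (fun x _ => (b2R R x - P1 L) ^+ 2) (fun _ _ => 0)); last by move=> *; rewrite mul0r addr0.
rewrite (eq_bigr (fun m => lpr L true m * ((1 - P1 L) ^+ 2) + lpr L false m * (P1 L ^+ 2))); last first.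
  by move=> m _; rewrite /b2R /=; ring.
rewrite sum_lin -/(P1 L) -/(P0 L).
have h := P10; have -> : P0 L = 1 - P1 L by lra.
ring.
Qed.

Lemma EXN_E : EXN L = P1 L.
Proof. by rewrite /EXN Ex_f; apply: eq_bigr => m _; rewrite ppX. Qed.

Lemma EYN_E : EYN L = AA L.
Proof. by rewrite /EYN Ex_f; apply: eq_bigr => m _; rewrite ppY. Qed.

Lemma VarXN_E : VarXN L = E1 L - P1 L ^+ 2.
Proof.
rewrite /VarXN EXN_E Ex_f.
rewrite (eq_bigr (fun m => (lpr L true m * XN L m + lpr L true m * (- 2 * P1 L)) + pp L m * (P1 L ^+ 2))); last first.
  by move=> m _; rewrite -(ppX m); ring.
rewrite big_split /= -mulr_suml big_split /= -mulr_suml -/(E1 L) -/(P1 L).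
have -> : \sum_m pp L m = 1 by rewrite -P10 /pp big_split.
ring.
Qed.

Lemma Cov_E : CovYNXN L = TT L - AA L * P1 L.
Proof.
rewrite /CovYNXN EXN_E EYN_E Ex_f.
rewrite (eq_bigr (fun m => (ss L m * XN L m + ss L m * (- P1 L)) + (lpr L true m * (- AA L) + pp L m * (AA L * P1 L)))); last first.
  by move=> m _; rewrite -(ppX m) -(ppY m); ring.
rewrite !big_split /= -!mulr_suml -/(TT L) -/(P1 L) -/(AA L).
have -> : \sum_m pp L m = 1 by rewrite -P10 /pp big_split.
ring.
Qed.

Lemma TT_E : TT L = K1 L + K0 L.
Proof.
rewrite /TT /K1 /K0 -big_split; apply: eq_bigr => m _ /=; rewrite /ss; ring.
Qed.

Lemma covB_E m : pp L m * covYX_N L m =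
  lpr L true m * MM L true m * (1 - XN L m) - lpr L false m * MM L false m * XN L m.
Proof.
rewrite /covYX_N /condN pN_E.
set Y := YN L m; set X := XN L m.
rewrite (@ExE L hv _ (fun x m' => - (b2R R (m' == m) * Y * (b2R R x - X)))
   (fun x m' => b2R R (m' == m) * (b2R R x - X))); last by move=> *; ring.
set F := (fun m' => lpr L true m' * (- (b2R R (m' == m) * Y * (b2R R true - X)) + b2R R (m' == m) * (b2R R true - X) * MM L true m') +
   lpr L false m' * (- (b2R R (m' == m) * Y * (b2R R false - X)) + b2R R (m' == m) * (b2R R false - X) * MM L false m')).
have -> : \sum_m' F m' = \sum_m' b2R R (m' == m) *
   (lpr L true m' * ((1 - X) * (MM L true m' - Y)) + lpr L false m' * ((- X) * (MM L false m' - Y))).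
  by apply: eq_bigr => m' _; rewrite /F /b2R /=; ring.
rewrite sum_ind.
have e : lpr L true m * ((1 - X) * (MM L true m - Y)) + lpr L false m * (- X * (MM L false m - Y))
   - (lpr L true m * MM L true m * (1 - X) - lpr L false m * MM L false m * X)
   = - Y * (lpr L true m - pp L m * X) by rewrite /pp; ring.
rewrite /X ppX subrr mulr0 in e; move/eqP: e; rewrite subr_eq0 => /eqP ->.
have [h|h] := eqVneq (pp L m) 0.
  by case: (pp0 _ h) => -> ->; rewrite h; ring.
by rewrite mulrC divfK.
Qed.

Lemma deltaB_E : deltaB L = A1 L - K1 L - K0 L.
Proof.
rewrite /deltaB Ex_f (eq_bigr _ (fun m _ => covB_E m)) /A1 /K1 /K0 -!sumrB.
by apply: eq_bigr => m _; ring.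
Qed.

Lemma DNM_E : D_NM L = TT L / P1 L - (AA L - TT L) / P0 L.
Proof.
rewrite /D_NM !Ex_f.
have -> : \sum_m pp L m * (XN L m * YN L m) = TT L.
  by apply: eq_bigr => m _; rewrite -(ppY m); ring.
have -> : \sum_m pp L m * XN L m = P1 L by apply: eq_bigr => m _; rewrite ppX.
have -> : \sum_m pp L m * ((1 - XN L m) * YN L m) = AA L - TT L.
  by rewrite /AA /TT -sumrB; apply: eq_bigr => m _; rewrite -(ppY m); ring.
have -> : \sum_m pp L m * (1 - XN L m) = P0 L by apply: eq_bigr => m _; rewrite pp1X.
by [].
Qed.

Lemma E0_E : \sum_m lpr L false m * XN L m = P1 L - E1 L.
Proof.
rewrite /P1 /E1 -sumrB; apply: eq_bigr => m _.
by have e := ppX m; rewrite /pp mulrDl in e; rewrite -{1}e; ring.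
Qed.

Lemma deltaW_E : 0 < P1 L -> 0 < P0 L ->
  deltaW L = K1 L - A1 L * E1 L / P1 L + (K0 L - A0 L * (P1 L - E1 L) / P0 L).
Proof.
move=> h1 h0.
rewrite /deltaW (@ExE L hv _ (fun x _ => covYXN_X L x) (fun _ _ => 0)); last by move=> *; rewrite mul0r addr0.
rewrite (eq_bigr (fun m => lpr L true m * covYXN_X L true + lpr L false m * covYXN_X L false)); last first.
  by move=> m _; ring.
rewrite sum_lin -/(P1 L) -/(P0 L).
have cy x : condX L (fun _ y _ => y) x = (\sum_m lpr L x m * MM L x m) / pX L x.
  rewrite (@condX_E _ (fun _ => 0) (fun _ => 1)); last by move=> *; rewrite mul1r add0r.
  by congr (_ / _); apply: eq_bigr => m _; ring.
have cx x : condX L (fun _ _ m => XN L m) x = (\sum_m lpr L x m * XN L m) / pX L x.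
  rewrite (@condX_E _ (fun m => XN L m) (fun _ => 0)); last by move=> *; rewrite mul0r addr0.
  by congr (_ / _); apply: eq_bigr => m _; ring.
have hpx x : pX L x != 0 by rewrite pX_E; case: x; [exact: lt0r_neq0 h1|exact: lt0r_neq0 h0].
have cv x : covYXN_X L x = (\sum_m lpr L x m * MM L x m * XN L m
    - (\sum_m lpr L x m * MM L x m) * (\sum_m lpr L x m * XN L m) / pX L x) / pX L x.
  rewrite /covYXN_X.
  set c := condX L (fun _ y _ => y) x; set e := condX L (fun _ _ m => XN L m) x.
  rewrite (@condX_E _ (fun m => - (c * (XN L m - e))) (fun m => XN L m - e)); last by move=> *; ring.
  congr (_ / _).
  rewrite (eq_bigr (fun m => lpr L x m * MM L x m * XN L m + (lpr L x m * MM L x m) * (- e)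
      + (lpr L x m * XN L m * (- c) + lpr L x m * (c * e)))); last by move=> m _; ring.
  rewrite !big_split /= -!mulr_suml /c /e cy cx.
  have -> : \sum_m lpr L x m = pX L x by rewrite pX_E.
  by field; exact: hpx.
rewrite !cv !pX_E -/(P1 L) -/(P0 L) E0_E -/(A1 L) -/(A0 L) -/(K1 L) -/(K0 L) -/(E1 L).
by field; rewrite !lt0r_neq0.
Qed.
End L.
Arguments q_ge0 {L}.
Arguments pp_ge0 {L}.
Arguments pp0 {L}.
Arguments Ex_f {L}.
Arguments pN_E {L}.
Arguments XN_E {L}.
Arguments YN_E {L}.
Arguments pXN_E {L}.
Arguments condXN_E {L}.
Arguments ppX {L}.
Arguments ppY {L}.
Arguments pp1X {L}.
Arguments bound_cell {L}.
Arguments P10 {L}.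
Arguments EX_E {L}.
Arguments EY_E {L}.
Arguments AA_E {L}.
Arguments pX_E {L}.
Arguments condX_E {L}.
Arguments Dpar_E {L}.
Arguments VarX_E {L}.
Arguments EXN_E {L}.
Arguments EYN_E {L}.
Arguments VarXN_E {L}.
Arguments Cov_E {L}.
Arguments TT_E {L}.
Arguments covB_E {L}.
Arguments deltaB_E {L}.
Arguments DNM_E {L}.
Arguments E0_E {L}.
Arguments deltaW_E {L}.

Lemma sum_pos (f : Nt -> R) n : (forall m, 0 <= f m) -> 0 < f n -> 0 < \sum_m f m.
Proof.
move=> h hn; rewrite (bigD1 n) //=.
have : 0 <= \sum_(m | m != n) f m by apply: sumr_ge0 => m _; apply: h.
lra.
Qed.

Section L2.
Variable (L : law R Nt).
Hypothesis hv : valid_law L.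
Hypothesis ov : standing_overlap L.

Lemma X_ge0 m : 0 <= XN L m.
Proof. by rewrite (XN_E hv) divr_ge0 ?(q_ge0 hv) ?(pp_ge0 hv). Qed.

Lemma q1X_ge0 m : 0 <= lpr L true m * (1 - XN L m).
Proof.
have e : lpr L true m * (1 - XN L m) = XN L m * lpr L false m.
  by rewrite -(pp1X hv) -(ppX hv m); ring.
by rewrite e mulr_ge0 ?X_ge0 ?(q_ge0 hv).
Qed.

Lemma pos_all : [/\ 0 < P1 L, 0 < P0 L & 0 < P1 L - E1 L].
Proof.
case: ov => n [hp /andP[hx0 hx1]]; rewrite (pN_E hv) in hp.
have h1 : 0 < lpr L true n by rewrite -(ppX hv) mulr_gt0.
have h0 : 0 < lpr L false n by rewrite -(pp1X hv) mulr_gt0 // subr_gt0.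
split.
- by apply: (@sum_pos _ n) => // m; apply: q_ge0.
- by apply: (@sum_pos _ n) => // m; apply: q_ge0.
- rewrite /P1 /E1 -sumrB.
  apply: (@sum_pos _ n) => [m|]; first by have := q1X_ge0 m; rewrite mulrBr mulr1.
  have : 0 < lpr L true n * (1 - XN L n) by rewrite mulr_gt0 // subr_gt0.
  by rewrite mulrBr mulr1.
Qed.

Lemma key :
  [/\ Dpar L * VarX L = deltaB L + CovYNXN L,
      Dpar L * VarXN L = CovYNXN L - deltaW L,
      D_NM L * VarX L = CovYNXN L,
      VarXN L < VarX L & 0 < VarX L].
Proof.
case: pos_all => h1 h0 h10.
have hP := P10 hv.
have e0 : P0 L = 1 - P1 L by lra.
rewrite (Dpar_E hv) (VarX_E hv) (deltaB_E hv) (Cov_E hv) (VarXN_E hv) (deltaW_E hv) // (DNM_E hv)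
  TT_E AA_E.
split.
- by rewrite e0; field; apply/andP; split; apply: lt0r_neq0; lra.
- by rewrite e0; field; apply/andP; split; apply: lt0r_neq0; lra.
- by rewrite e0; field; apply/andP; split; apply: lt0r_neq0; lra.
- rewrite e0; lra.
- by rewrite mulr_gt0.
Qed.
End L2.
Arguments pos_all {L}.
Arguments key {L}.

Definition tmx (Ylo Yhi : R) (L : law R Nt) m :=
  Num.min (ss L m - Ylo * lpr L false m) (Yhi * lpr L true m).
Definition umx (Ylo Yhi : R) (L : law R Nt) m :=
  Num.min (ss L m - Ylo * lpr L true m) (Yhi * lpr L false m).
Definition feas (Ylo Yhi : R) (L : law R Nt) (t : Nt -> R) := forall m,
  (Ylo * lpr L true m <= t m <= Yhi * lpr L true m) /\
  (ss L m - Yhi * lpr L false m <= t m <= ss L m - Ylo * lpr L false m).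

Lemma minP' (a b : R) : (Num.min a b = a /\ a <= b) \/ (Num.min a b = b /\ b <= a).
Proof.
case: (leP a b) => h; [left|right]; split => //; exact: ltW.
Qed.

Ltac mcase := match goal with |- context [Num.min ?a ?b] =>
  case: (minP' a b) => [[-> ?]|[-> ?]] end.

Section L3.
Variables (Ylo Yhi : R) (L : law R Nt).
Hypothesis hv : valid_law L.
Hypothesis sb : standing_bound Ylo Yhi L.
Hypothesis hle : Ylo <= Yhi.

Lemma MOBp_E : D_MOBp Ylo Yhi L = (\sum_m tmx Ylo Yhi L m - P1 L * AA L) / VarX L.
Proof.
rewrite /D_MOBp (Ex_f hv) (EX_E hv) (EY_E hv); congr ((_ - _) / _).
apply: eq_bigr => m _; rewrite /tmx minr_pMr ?(pp_ge0 hv) // mulrBr (ppY hv).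
by rewrite [pp L m * (Ylo * _)]mulrCA (pp1X hv) [pp L m * (Yhi * _)]mulrCA (ppX hv).
Qed.

Lemma MOBm_E : D_MOBm Ylo Yhi L = (AA L * (1 - P1 L) - \sum_m umx Ylo Yhi L m) / VarX L.
Proof.
rewrite /D_MOBm (Ex_f hv) (EX_E hv) (EY_E hv); congr ((_ - _) / _).
apply: eq_bigr => m _; rewrite /umx minr_pMr ?(pp_ge0 hv) // mulrBr (ppY hv).
by rewrite [pp L m * (Ylo * _)]mulrCA (ppX hv) [pp L m * (Yhi * _)]mulrCA (pp1X hv).
Qed.

Lemma cells m :
  [/\ Ylo * lpr L true m <= lpr L true m * MM L true m <= Yhi * lpr L true m,
      Ylo * lpr L false m <= lpr L false m * MM L false m <= Yhi * lpr L false m,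
      0 <= lpr L true m & 0 <= lpr L false m].
Proof. by split; rewrite ?(bound_cell hv) ?(q_ge0 hv). Qed.

Lemma A1_le : A1 L <= \sum_m tmx Ylo Yhi L m.
Proof.
apply: ler_sum => m _; rewrite /tmx /ss.
case: (cells m) => /andP[h1 h2] /andP[h3 h4] h5 h6.
by mcase; lra.
Qed.

Lemma A0_le : A0 L <= \sum_m umx Ylo Yhi L m.
Proof.
apply: ler_sum => m _; rewrite /umx /ss.
case: (cells m) => /andP[h1 h2] /andP[h3 h4] h5 h6.
by mcase; lra.
Qed.

Lemma DV_E : 0 < P1 L -> 0 < P0 L -> Dpar L * VarX L = A1 L - P1 L * AA L.
Proof.
move=> p1 p0.
have hP := P10 hv; have e0 : P0 L = 1 - P1 L by lra.
rewrite (Dpar_E hv) (VarX_E hv) AA_E e0.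
by field; apply/andP; split; apply: lt0r_neq0; lra.
Qed.

Lemma feas_flat : feas Ylo Yhi L (fun m => ss L m * XN L m).
Proof.
move=> m; case: (cells m) => /andP[h1 h2] /andP[h3 h4] h5 h6.
have [hp|hp] := eqVneq (pp L m) 0.
  case: (pp0 hv _ hp) => e1 e0; rewrite /ss e1 e0 !mul0r !mulr0 add0r subr0.
  by rewrite mul0r lexx; split.
have hp' : 0 < pp L m by rewrite lt0r hp (pp_ge0 hv).
set y := ss L m / pp L m.
have ey : ss L m = pp L m * y by rewrite /y mulrC divfK.
have ex := ppX hv m.
have -> : ss L m * XN L m = y * lpr L true m by rewrite ey -ex; ring.
have hy1 : Ylo * pp L m <= pp L m * y by rewrite -ey /ss /pp; lra.
have hy2 : pp L m * y <= Yhi * pp L m by rewrite -ey /ss /pp; lra.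
have hy3 : Ylo <= y by nra.
have hy4 : y <= Yhi by nra.
rewrite ey /pp; split; apply/andP; split; nra.
Qed.

Lemma feas_tmx : feas Ylo Yhi L (tmx Ylo Yhi L).
Proof.
move=> m; case: (cells m) => /andP[h1 h2] /andP[h3 h4] h5 h6.
rewrite /tmx /ss; mcase; split; apply/andP; split; nra.
Qed.

Lemma feas_umx : feas Ylo Yhi L (fun m => ss L m - umx Ylo Yhi L m).
Proof.
move=> m; case: (cells m) => /andP[h1 h2] /andP[h3 h4] h5 h6.
rewrite /umx /ss; mcase; split; apply/andP; split; nra.
Qed.
End L3.
Arguments DV_E {L}.

Lemma feas_interp Ylo Yhi (L : law R Nt) ta tb z :
  feas Ylo Yhi L ta -> feas Ylo Yhi L tb ->
  \sum_m ta m <= z <= \sum_m tb m ->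
  exists t, feas Ylo Yhi L t /\ \sum_m t m = z.
Proof.
move=> fa fb /andP[za zb].
have [e|ne] := eqVneq (\sum_m tb m - \sum_m ta m) 0.
  by exists ta; split => //; lra.
have hpos : 0 < \sum_m tb m - \sum_m ta m by rewrite lt0r ne /=; lra.
set l := (z - \sum_m ta m) / (\sum_m tb m - \sum_m ta m).
have l0 : 0 <= l by rewrite /l divr_ge0 //; lra.
have l1 : l <= 1 by rewrite /l ler_pdivrMr // mul1r; lra.
exists (fun m => ta m + l * (tb m - ta m)); split.
  move=> m; case: (fa m) => /andP[a1 a2] /andP[a3 a4]; case: (fb m) => /andP[b1 b2] /andP[b3 b4].
  split; apply/andP; split; nra.
rewrite big_split /= -mulr_sumr sumrB /l divfK //; ring.
Qed.

Definition dlaw (q : bool -> Nt -> R) (v : bool -> Nt -> R) : law R Nt :=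
  @Law R Nt q (fun x n => (\d_(v x n) : probability R R)).

Lemma dirac_int (a : R) : (\d_a : probability R R).-integrable setT (fun y : R => y%:E).
Proof.
apply/integrableP; split; first exact/measurable_EFinP.
rewrite integral_dirac //=; last first.
  by apply: measurableT_comp => //; exact/measurable_EFinP.
by rewrite diracE in_setT mul1e ltry.
Qed.

Lemma dirac_mean (a : R) : fine (\int[(\d_a : probability R R)]_(y in setT) y%:E)%E = a.
Proof.
rewrite integral_dirac //=.
by rewrite indicE in_setT mul1r.
Qed.

Definition vv (L : law R Nt) (t : Nt -> R) x m :=
  if x then t m / lpr L true m else (ss L m - t m) / lpr L false m.

Section L4.
Variables (Ylo Yhi : R) (L : law R Nt) (t : Nt -> R).
Hypothesis hv : valid_law L.
Hypothesis ov : standing_overlap L.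
Hypothesis ft : feas Ylo Yhi L t.

Let L' := dlaw (lpr L) (vv L t).

Lemma MM_d x m : MM L' x m = vv L t x m.
Proof. exact: dirac_mean. Qed.

Lemma valid_d : valid_law L'.
Proof.
case: hv => h1 [h2 h3]; split => //; split => //.
by move=> x n _; exact: dirac_int.
Qed.

Lemma qv1 m : lpr L true m * vv L t true m = t m.
Proof.
rewrite /vv; have [h|h] := eqVneq (lpr L true m) 0.
  case: (ft m) => /andP[a b] _; rewrite h !mulr0 in a b.
  by rewrite h mul0r; apply/eqP; rewrite eq_le a b.
by rewrite mulrC divfK.
Qed.

Lemma qv0 m : lpr L false m * vv L t false m = ss L m - t m.
Proof.
rewrite /vv; have [h|h] := eqVneq (lpr L false m) 0.
  case: (ft m) => _ /andP[a b]; rewrite h !mulr0 !subr0 in a b.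
  have -> : t m = ss L m by apply/eqP; rewrite eq_le a b.
  by rewrite h mul0r subrr.
by rewrite mulrC divfK.
Qed.

Lemma ss_d m : ss L' m = ss L m.
Proof. by rewrite {1}/ss /= !MM_d qv1 qv0; ring. Qed.

Lemma XN_d m : XN L' m = XN L m.
Proof. by rewrite (XN_E valid_d) (XN_E hv). Qed.

Lemma YN_d m : YN L' m = YN L m.
Proof. by rewrite (YN_E valid_d) (YN_E hv) ss_d. Qed.

Lemma obs_d : same_observed L L'.
Proof. by move=> n; split; rewrite ?XN_d ?YN_d // (pN_E valid_d) (pN_E hv). Qed.

Lemma ov_d : standing_overlap L'.
Proof.
case: ov => n [h1 h2]; exists n; rewrite XN_d; split => //.
by rewrite (pN_E valid_d) (pN_E hv) in h1 *.
Qed.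

Lemma sb_d : standing_bound Ylo Yhi L'.
Proof.
move=> x n; rewrite (pXN_E valid_d) (condXN_E valid_d) /= => hp.
rewrite mulrC mulKf ?gt_eqF // MM_d.
case: x hp => hp.
  have := qv1 n; case: (ft n) => /andP[a b] _ e; rewrite -e in a b.
  by apply/andP; split; nra.
have := qv0 n; case: (ft n) => _ /andP[a b] e.
have a' : Ylo * lpr L false n <= lpr L false n * vv L t false n by rewrite e; lra.
have b' : lpr L false n * vv L t false n <= Yhi * lpr L false n by rewrite e; lra.
by apply/andP; split; nra.
Qed.

Lemma VarX_d : VarX L' = VarX L.
Proof. by rewrite (VarX_E valid_d) (VarX_E hv). Qed.

Lemma AA_d : AA L' = AA L.
Proof. by rewrite /AA; apply: eq_bigr => m _; rewrite ss_d. Qed.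

Lemma Cov_d : CovYNXN L' = CovYNXN L.
Proof.
rewrite (Cov_E valid_d) (Cov_E hv) AA_d; congr (_ - _ * _).
by rewrite /TT; apply: eq_bigr => m _; rewrite ss_d XN_d.
Qed.

Lemma VarXN_d : VarXN L' = VarXN L.
Proof.
rewrite (VarXN_E valid_d) (VarXN_E hv); congr (_ - _).
by rewrite /E1; apply: eq_bigr => m _; rewrite XN_d.
Qed.

Lemma construct : exists L2 : law R Nt,
  [/\ valid_law L2, same_observed L L2, standing_bound Ylo Yhi L2,
      Dpar L2 * VarX L = \sum_m t m - P1 L * AA L &
      deltaB L2 = Dpar L2 * VarX L - CovYNXN L /\
      deltaW L2 = CovYNXN L - Dpar L2 * VarXN L].
Proof.
exists L'; split.
- exact: valid_d.
- exact: obs_d.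
- exact: sb_d.
- case: (pos_all hv ov) => h1 h0 _.
  rewrite -VarX_d (DV_E valid_d) // AA_d.
  by congr (_ - _); rewrite /A1; apply: eq_bigr => m _; rewrite MM_d qv1.
- case: (key valid_d ov_d) => e1 e2 _ _ _.
  rewrite VarX_d Cov_d in e1; rewrite VarXN_d Cov_d in e2.
  by split; [rewrite e1|rewrite e2]; ring.
Qed.
End L4.
Lemma lemin (x y z : R) : z <= x -> z <= y -> z <= Num.min x y.
Proof. by move=> a b; rewrite le_min a b. Qed.
Lemma lemin_inv (x y z : R) : z <= Num.min x y -> z <= x /\ z <= y.
Proof. by rewrite le_min => /andP. Qed.
Lemma gemax (x y z : R) : x <= z -> y <= z -> Num.max x y <= z.
Proof. by move=> a b; rewrite ge_max a b. Qed.
Lemma gemax_inv (x y z : R) : Num.max x y <= z -> x <= z /\ y <= z.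
Proof. by rewrite ge_max => /andP. Qed.

Lemma signI (V W C D dnm der dB dW : R) :
  0 < W -> W < V -> D*V = dB + C -> D*W = C - dW -> dnm*V = C -> der*W = C ->
  0 <= dW*dB -> dnm <= der ->
  [/\ 0 <= dnm, dnm <= D, D <= der, 0 <= dB & 0 <= dW].
Proof.
move=> hW hWV e1 e2 e3 e4 hr h.
have hV : 0 < V by lra.
have c1 : dnm * W <= C.
  have : 0 <= W * (der - dnm) by rewrite mulr_ge0 // ?subr_ge0 // ltW.
  rewrite mulrBr; lra.
have c2 : 0 <= dnm.
  have : 0 <= (V - W) * dnm by rewrite mulrBl; lra.
  by rewrite pmulr_rge0 // subr_gt0.
have eB : dB = (D - dnm) * V by rewrite mulrBl; lra.
have eW : dW = (der - D) * W by rewrite mulrBl; lra.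
have hB : 0 <= dB.
  rewrite leNgt; apply/negP => hneg.
  have hD : D - dnm < 0 by move: hneg; rewrite eB pmulr_llt0.
  have hw : 0 < dW by rewrite eW mulr_gt0 //; lra.
  have : dW * dB < 0 by rewrite pmulr_rlt0.
  lra.
have hw : 0 <= dW.
  rewrite leNgt; apply/negP => hneg.
  have hD : der - D < 0 by move: hneg; rewrite eW pmulr_llt0.
  have hb : 0 < dB by rewrite eB mulr_gt0 //; lra.
  have : dW * dB < 0 by rewrite pmulr_llt0.
  lra.
split => //.
- by move: hB; rewrite eB pmulr_lge0 // subr_ge0.
- by move: hw; rewrite eW pmulr_lge0 // subr_ge0.
Qed.

Lemma signII (V W C D dnm der dB dW : R) :
  0 < W -> W < V -> D*V = dB + C -> D*W = C - dW -> dnm*V = C -> der*W = C ->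
  0 <= dW*dB -> der <= dnm ->
  [/\ dnm <= 0, D <= dnm, der <= D, dB <= 0 & dW <= 0].
Proof.
move=> hW hWV e1 e2 e3 e4 hr h.
have h1 : (-D)*V = -dB + -C by rewrite mulNr e1 opprD.
have h2 : (-D)*W = -C - -dW by rewrite mulNr e2 opprB; lra.
have h3 : (-dnm)*V = -C by rewrite mulNr e3.
have h4 : (-der)*W = -C by rewrite mulNr e4.
have h5 : 0 <= (-dW)*(-dB) by rewrite mulrNN.
have h6 : -dnm <= -der by rewrite lerN2.
case: (@signI V W (-C) (-D) (-dnm) (-der) (-dB) (-dW) hW hWV h1 h2 h3 h4 h5 h6).
rewrite !oppr_ge0 !lerN2 => *; by split.
Qed.

End S.
Arguments pos_all {R Nt L}.
Arguments signI {R V W C D dnm der dB dW}.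
Arguments signII {R V W C D dnm der dB dW}.
Arguments key {R Nt L}.
Arguments P10 {R Nt L}.
Arguments DV_E {R Nt L}.
Arguments MOBp_E {R Nt} Ylo Yhi {L}.
Arguments MOBm_E {R Nt} Ylo Yhi {L}.
Arguments A1_le {R Nt Ylo Yhi L}.
Arguments A0_le {R Nt Ylo Yhi L}.
Arguments Cov_E {R Nt L}.
Arguments feas_interp {R Nt Ylo Yhi L ta tb z}.
Arguments feas_flat {R Nt Ylo Yhi L}.
Arguments feas_tmx {R Nt Ylo Yhi L}.
Arguments feas_umx {R Nt Ylo Yhi L}.
Arguments construct {R Nt Ylo Yhi L t}.

Theorem proposition8 (R : realType) (Nt : finType) (Ylo Yhi : R)
    (L : law R Nt) :
  Ylo <= Yhi ->
  valid_law L -> standing_overlap L -> standing_bound Ylo Yhi L ->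
  0 < VarXN L ->
  reinforcement L ->
  (* (i) *)
  (D_NM L <= D_ER L ->
     [/\ 0 <= D_NM L, D_NM L <= Dpar L &
         Dpar L <= Num.min (D_MOBp Ylo Yhi L) (D_ER L)]) /\
  (* (ii) *)
  (D_ER L <= D_NM L ->
     [/\ Num.max (D_MOBm Ylo Yhi L) (D_ER L) <= Dpar L,
         Dpar L <= D_NM L & D_NM L <= 0]) /\
  (* (iii) sharpness of (i) *)
  (D_NM L <= D_ER L ->
     forall d : R, D_NM L <= d <= Num.min (D_MOBp Ylo Yhi L) (D_ER L) ->
     exists L' : law R Nt,
       [/\ valid_law L', same_observed L L', standing_bound Ylo Yhi L',
           reinforcement L' & Dpar L' = d]) /\
  (* (iii) sharpness of (ii) *)
  (D_ER L <= D_NM L ->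
     forall d : R, Num.max (D_MOBm Ylo Yhi L) (D_ER L) <= d <= D_NM L ->
     exists L' : law R Nt,
       [/\ valid_law L', same_observed L L', standing_bound Ylo Yhi L',
           reinforcement L' & Dpar L' = d]).
Proof.

Proof.
move=> hle hv ov sb hW hr.
case: (pos_all hv ov) => p1 p0 _.
case: (key hv ov) => eB eW eN hWV hV.
have hP := P10 hv.
have eAA := @AA_E R Nt L.
have eR : D_ER L * VarXN L = CovYNXN L by rewrite /D_ER (divfK (lt0r_neq0 hW)).
have dv := DV_E hv p1 p0.
have mp : D_MOBp Ylo Yhi L * VarX L = \sum_m tmx Ylo Yhi L m - P1 L * AA L.
  by rewrite (MOBp_E Ylo Yhi hv) (divfK (lt0r_neq0 hV)).
have mm : D_MOBm Ylo Yhi L * VarX L = AA L * (1 - P1 L) - \sum_m umx Ylo Yhi L m.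
  by rewrite (MOBm_E Ylo Yhi hv) (divfK (lt0r_neq0 hV)).
have a1 := A1_le hv sb.
have a0 := A0_le hv sb.
have eC : CovYNXN L = TT L - AA L * P1 L by rewrite (Cov_E hv).
have eC' : CovYNXN L = TT L - P1 L * AA L by rewrite eC mulrC.
rewrite /reinforcement in hr.
split; [|split; [|split]].
- move=> h; case: (signI hW hWV eB eW eN eR hr h) => c2 c3 c4 _ _; split; [exact: c2|exact: c3|].
  apply: lemin; last exact: c4.
  by rewrite -(ler_pM2r hV) dv mp; lra.
- move=> h; case: (signII hW hWV eB eW eN eR hr h) => c2 c3 c4 _ _; split; [|exact: c3|exact: c2].
  apply: gemax; last exact: c4.
  rewrite -(ler_pM2r hV) dv mm eAA; lra.
- move=> h d /andP[hd1] /lemin_inv [hd2 hd3].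
  case: (signI hW hWV eB eW eN eR hr h) => c2 _ _ _ _.
  have k1 : D_NM L * VarX L <= d * VarX L := ler_wpM2r (ltW hV) hd1.
  have k2 : d * VarX L <= D_MOBp Ylo Yhi L * VarX L := ler_wpM2r (ltW hV) hd2.
  have [t [ft et]] : exists t, feas Ylo Yhi L t /\ \sum_m t m = P1 L * AA L + d * VarX L.
    apply: (feas_interp (feas_flat hv sb) (feas_tmx hv sb)).
    have -> : \sum_m ss L m * XN L m = TT L by [].
    apply/andP; split; lra.
  case: (construct hv ov ft) => L2 [v2 o2 s2 e2 [eb ew]].
  have hd : Dpar L2 = d.
    apply: (mulIf (lt0r_neq0 hV)); rewrite e2 et; ring.
  exists L2; split; [exact: v2|exact: o2|exact: s2| |exact: hd].
  have k3 : 0 <= (d - D_NM L) * VarX L by apply: mulr_ge0; [rewrite subr_ge0; exact: hd1|exact: ltW hV].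
  have k4 : 0 <= (D_ER L - d) * VarXN L by apply: mulr_ge0; [rewrite subr_ge0; exact: hd3|exact: ltW hW].
  rewrite mulrBl in k3; rewrite mulrBl in k4.
  rewrite /reinforcement eb ew hd; apply: mulr_ge0; lra.
- move=> h d /andP[] /gemax_inv [hd1 hd2] hd3.
  case: (signII hW hWV eB eW eN eR hr h) => c2 _ _ _ _.
  have k1 : d * VarX L <= D_NM L * VarX L := ler_wpM2r (ltW hV) hd3.
  have k2 : D_MOBm Ylo Yhi L * VarX L <= d * VarX L := ler_wpM2r (ltW hV) hd1.
  have [t [ft et]] : exists t, feas Ylo Yhi L t /\ \sum_m t m = P1 L * AA L + d * VarX L.
    apply: (feas_interp (feas_umx hv sb) (feas_flat hv sb)).
    have -> : \sum_m ss L m * XN L m = TT L by [].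
    rewrite sumrB -/(AA L).
    have e5 : AA L * (1 - P1 L) = AA L - P1 L * AA L by ring.
    apply/andP; split; lra.
  case: (construct hv ov ft) => L2 [v2 o2 s2 e2 [eb ew]].
  have hd : Dpar L2 = d.
    apply: (mulIf (lt0r_neq0 hV)); rewrite e2 et; ring.
  exists L2; split; [exact: v2|exact: o2|exact: s2| |exact: hd].
  have k3 : 0 <= (D_NM L - d) * VarX L by apply: mulr_ge0; [rewrite subr_ge0; exact: hd3|exact: ltW hV].
  have k4 : 0 <= (d - D_ER L) * VarXN L by apply: mulr_ge0; [rewrite subr_ge0; exact: hd2|exact: ltW hW].
  rewrite mulrBl in k3; rewrite mulrBl in k4.
  rewrite /reinforcement eb ew hd; apply: mulr_le0; lra.
Qed.
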